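(* Let $$G(t)=\sum_{n=1}^{\infty}\exp\big(t-\pi n^2 e^{4t}\big)\big(16\pi^2 n^4 e^{8t}-24\pi n^2 e^{4t}\big),\qquad t\ge 0,$$ and for $z\in\mathbb{C}$ let $\eta(z)=\int_0^\infty G(t)\cosh(zt)\,dt$. Then for every real $y$ there exists $\varepsilon>0$ such that $\eta(x+iy)\neq 0$ for all real $x$ with $0<|x|<\varepsilon$.
   Context: The function $\eta$ satisfies $\eta(z)=\xi\big(\tfrac{z+1}{2}\big)$, where $\xi(s)=\tfrac12 s(s-1)\pi^{-s/2}\Gamma(s/2)\zeta(s)$ is Riemann's xi-function; the line $\operatorname{Re}z=0$ corresponds to the critical line $\operatorname{Re}s=1/2$. *)

(* Defs.v *)
From Stdlib Require Import Reals.
From Coquelicot Require Import Coquelicot.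
Open Scope R_scope.

Definition G_term (t : R) (n : nat) : R :=
  exp (t - PI * (INR n)^2 * exp (4*t)) *
  (16 * PI^2 * (INR n)^4 * exp (8*t) - 24 * PI * (INR n)^2 * exp (4*t)).

Definition G (t : R) : R := Series (fun k => G_term t (S k)).

Definition Cexp (z : Complex.C) : Complex.C :=
  (exp (Re z) * cos (Im z), exp (Re z) * sin (Im z)).
Definition Ccosh (z : Complex.C) : Complex.C :=
  Cmult (/2) (Cplus (Cexp z) (Cexp (Copp z))).

Definition eta (z : Complex.C) : Complex.C :=
  RInt_gen (V := C_R_CompleteNormedModule)
    (fun t : R => Cmult (RtoC (G t)) (Ccosh (Cmult z (RtoC t))))
    (at_point 0) (Rbar_locally p_infty).

(* Main.v *)
Require Import Defs.
From Stdlib Require Import Reals.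
From Coquelicot Require Import Coquelicot.
From Stdlib Require Import Lra Lia Psatz FunctionalExtensionality Arith Factorial ZArith Classical.
Open Scope R_scope.


Lemma sum_ge_last (f : nat -> R) (n : nat) :
  (forall k, 0 <= f k) -> f n <= sum_f_R0 f n.
Proof.
  intros H. destruct n; simpl. lra.
  pose proof (cond_pos_sum f n H). lra.
Qed.

Lemma Derive_n_exp : forall m x, Derive_n exp m x = exp x.
Proof.
  induction m; intros x; simpl. reflexivity.
  rewrite (Derive_ext _ exp). apply is_derive_unique, is_derive_exp.
  intros; apply IHm.
Qed.

Lemma ex_derive_n_exp : forall m x, ex_derive_n exp m x.
Proof.
  destruct m; intros x; simpl. trivial.
  apply (ex_derive_ext exp). intros; symmetry; apply Derive_n_exp.
  eexists; apply is_derive_exp.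
Qed.

Lemma exp_ge_pow (a : R) (N : nat) : 0 <= a -> a ^ N / INR (fact N) <= exp a.
Proof.
  intros Ha. destruct (Req_dec a 0) as [->|Hne].
  - destruct N. simpl. rewrite exp_0. lra.
    rewrite pow_ne_zero by lia. unfold Rdiv; rewrite Rmult_0_l. left; apply exp_pos.
  - destruct (Taylor_Lagrange exp N 0 a) as [z [Hz E]]. lra.
    intros; apply ex_derive_n_exp.
    rewrite E. rewrite Rminus_0_r.
    assert (H1 : a ^ N / INR (fact N) <= sum_f_R0 (fun m => a ^ m / INR (fact m) * Derive_n exp m 0) N).
    { replace (a ^ N / INR (fact N)) with ((fun m => a ^ m / INR (fact m) * Derive_n exp m 0) N).
      apply (sum_ge_last (fun m => a ^ m / INR (fact m) * Derive_n exp m 0)). intros k. rewrite Derive_n_exp, exp_0, Rmult_1_r.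
      apply Rdiv_le_0_compat. apply pow_le; lra. apply INR_fact_lt_0.
      rewrite Derive_n_exp, exp_0; ring. }
    assert (0 <= a ^ S N / INR (fact (S N)) * Derive_n exp (S N) z).
    { rewrite Derive_n_exp. apply Rmult_le_pos. apply Rdiv_le_0_compat. apply pow_le; lra. apply INR_fact_lt_0.
      left; apply exp_pos. }
    lra.
Qed.

Lemma sum_at0 (f : R -> R) (n : nat) :
  sum_f_R0 (fun m => 0 ^ m / INR (fact m) * Derive_n f m 0) n = f 0.
Proof.
  induction n; simpl. field.
  rewrite IHn. unfold Rdiv. rewrite !Rmult_0_l. apply Rplus_0_r.
Qed.

Lemma TLb (f : R -> R) (n : nat) (u M : R) : 0 <= u ->
  (forall t k, ex_derive_n f k t) ->
  (forall z, 0 <= z <= u -> Rabs (Derive_n f (S n) z) <= M) ->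
  Rabs (f u - sum_f_R0 (fun m => u ^ m / INR (fact m) * Derive_n f m 0) n)
    <= u ^ (S n) / INR (fact (S n)) * M.
Proof.
  intros Hu Hd HM. destruct (Req_dec u 0) as [->|Hne].
  - rewrite sum_at0. rewrite Rminus_diag, Rabs_R0. simpl. rewrite Rmult_0_l.
    unfold Rdiv; rewrite !Rmult_0_l. lra.
  - destruct (Taylor_Lagrange f n 0 u) as [z [Hz E]]. lra.
    intros; apply Hd.
    rewrite Rminus_0_r in E. rewrite E.
    match goal with |- Rabs (?A + ?B - ?A) <= _ => replace (A + B - A) with B by ring end.
    assert (Hp : 0 <= u ^ S n / INR (fact (S n))).
    { apply Rdiv_le_0_compat. apply pow_le; lra. apply INR_fact_lt_0. }
    rewrite Rabs_mult, (Rabs_pos_eq _ Hp). apply Rmult_le_compat_l. exact Hp.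
    apply HM; lra.
Qed.


Section Pair.
Variables (f0 f1 : R -> R) (s : R).
Hypothesis H0 : forall x, is_derive f0 x (f1 x).
Hypothesis H1 : forall x, is_derive f1 x (s * f0 x).

Lemma DnS (f : R -> R) k x : Derive_n f (S k) x = Derive (Derive_n f k) x.
Proof. reflexivity. Qed.

Lemma pairD : forall j x, Derive_n f0 (2*j) x = s^j * f0 x /\ Derive_n f0 (S (2*j)) x = s^j * f1 x.
Proof.
  induction j.
  - intros x. split. simpl; ring. rewrite DnS. change (Derive f0 x = s^0 * f1 x).
    rewrite (is_derive_unique _ _ _ (H0 x)). ring.
  - assert (E1 : forall x, Derive_n f0 (2 * S j) x = s ^ S j * f0 x).
    { intros x. replace (2 * S j)%nat with (S (S (2 * j))) by lia. rewrite DnS.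
      rewrite (Derive_ext _ (fun y => s^j * f1 y)) by (intros; apply IHj).
      rewrite Derive_scal. rewrite (is_derive_unique _ _ _ (H1 x)). simpl; ring. }
    intros x. split. apply E1.
    rewrite DnS.
    rewrite (Derive_ext _ (fun y => s^(S j) * f0 y)) by (intros; apply E1).
    rewrite Derive_scal. rewrite (is_derive_unique _ _ _ (H0 x)). ring.
Qed.

Lemma pair_ex : forall k x, ex_derive_n f0 k x.
Proof.
  intros [|k] x. simpl; trivial. simpl.
  destruct (Nat.Even_or_Odd k) as [[j ->]|[j ->]].
  - apply (ex_derive_ext (fun y => s^j * f0 y)). intros; symmetry; apply pairD.
    apply ex_derive_scal. eexists; apply H0.
  - replace (2*j+1)%nat with (S (2*j)) by lia.
    apply (ex_derive_ext (fun y => s^j * f1 y)). intros; symmetry; apply pairD.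
    apply ex_derive_scal. eexists; apply H1.
Qed.

Lemma pair_bound (B : R -> R) : Rabs s = 1 -> (forall z, Rabs (f0 z) <= B z /\ Rabs (f1 z) <= B z) ->
  forall k z, Rabs (Derive_n f0 k z) <= B z.
Proof.
  intros Hs HB k z.
  destruct (Nat.Even_or_Odd k) as [[j ->]|[j ->]].
  - rewrite (proj1 (pairD j z)). rewrite Rabs_mult, <- RPow_abs, Hs, pow1, Rmult_1_l. apply HB.
  - replace (2*j+1)%nat with (S (2*j)) by lia.
    rewrite (proj2 (pairD j z)). rewrite Rabs_mult, <- RPow_abs, Hs, pow1, Rmult_1_l. apply HB.
Qed.
End Pair.

Definition ch (u : R) := (exp u + exp (- u)) / 2.
Definition sh (u : R) := (exp u - exp (- u)) / 2.

Ltac dfin := first [ring | (unfold Rdiv, Rminus; ring) | (change (@one R_Ring) with 1; ring) | lra | idtac].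
Lemma d_ch (x : R) : is_derive ch x (sh x). Proof. unfold ch, sh. auto_derive; auto. dfin. Qed.
Lemma d_sh (x : R) : is_derive sh x (1 * ch x). Proof. unfold ch, sh. auto_derive; auto. dfin. Qed.
Lemma d_sh2 (x : R) : is_derive sh x (ch x). Proof. unfold ch, sh. auto_derive; auto. dfin. Qed.
Lemma d_ch2 (x : R) : is_derive ch x (1 * sh x). Proof. unfold ch, sh. auto_derive; auto. dfin. Qed.
Lemma d_cos (x : R) : is_derive cos x (- sin x). Proof. auto_derive; auto. dfin. Qed.
Lemma d_msin (x : R) : is_derive (fun x => - sin x) x (-1 * cos x). Proof. auto_derive; auto. dfin. Qed.
Lemma d_sin (x : R) : is_derive sin x (cos x). Proof. auto_derive; auto. dfin. Qed.
Lemma d_cos' (x : R) : is_derive cos x (-1 * sin x). Proof. auto_derive; auto. dfin. Qed.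

Lemma coef_cos k : exists l, Derive_n cos k 0 = l * Derive_n ch k 0.
Proof.
  destruct (Nat.Even_or_Odd k) as [[j ->]|[j ->]].
  - exists ((-1)^j). rewrite (proj1 (pairD _ _ _ d_cos d_msin j 0)).
    rewrite (proj1 (pairD _ _ _ d_ch d_sh j 0)). rewrite cos_0, pow1. unfold ch. rewrite Ropp_0, exp_0. field.
  - replace (2*j+1)%nat with (S (2*j)) by lia. exists 0.
    rewrite (proj2 (pairD _ _ _ d_cos d_msin j 0)). rewrite sin_0. ring.
Qed.

Lemma coef_sin k : exists l, Derive_n sin k 0 = l * Derive_n sh k 0.
Proof.
  destruct (Nat.Even_or_Odd k) as [[j ->]|[j ->]].
  - exists 0. rewrite (proj1 (pairD _ _ _ d_sin d_cos' j 0)). rewrite sin_0. ring.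
  - replace (2*j+1)%nat with (S (2*j)) by lia. exists ((-1)^j).
    rewrite (proj2 (pairD _ _ _ d_sin d_cos' j 0)).
    rewrite (proj2 (pairD _ _ _ d_sh2 d_ch2 j 0)). rewrite cos_0, pow1. unfold ch. rewrite Ropp_0, exp_0. field.
Qed.

Lemma cos_exd : forall t k, ex_derive_n cos k t.
Proof. intros t k. exact (pair_ex cos (fun x => - sin x) (-1) d_cos d_msin k t). Qed.
Lemma sin_exd : forall t k, ex_derive_n sin k t.
Proof. intros t k. exact (pair_ex sin cos (-1) d_sin d_cos' k t). Qed.
Lemma ch_exd : forall t k, ex_derive_n ch k t.
Proof. intros t k. exact (pair_ex ch sh 1 d_ch d_sh k t). Qed.
Lemma sh_exd : forall t k, ex_derive_n sh k t.
Proof. intros t k. exact (pair_ex sh ch 1 d_sh2 d_ch2 k t). Qed.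

Lemma abs_m1 : Rabs (-1) = 1.
Proof. rewrite Rabs_left; lra. Qed.

Lemma cos_bnd : forall k z, Rabs (Derive_n cos k z) <= 1.
Proof.
  intros k z. apply (pair_bound cos (fun x => - sin x) (-1) d_cos d_msin (fun _ => 1) abs_m1).
  intros u. split; apply Rabs_le. apply COS_bound. pose proof (SIN_bound u). lra.
Qed.
Lemma sin_bnd : forall k z, Rabs (Derive_n sin k z) <= 1.
Proof.
  intros k z. apply (pair_bound sin cos (-1) d_sin d_cos' (fun _ => 1) abs_m1).
  intros u. split; apply Rabs_le. apply SIN_bound. apply COS_bound.
Qed.
Lemma chsh_le z : Rabs (ch z) <= exp (Rabs z) /\ Rabs (sh z) <= exp (Rabs z).
Proof.
  assert (H1 : exp z <= exp (Rabs z)) by (destruct (Rle_lt_or_eq_dec _ _ (Rle_abs z)) as [h|h];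
     [left; apply exp_increasing, h | right; f_equal; exact h]).
  assert (H2 : exp (- z) <= exp (Rabs z)).
  { rewrite <- (Rabs_Ropp z). destruct (Rle_lt_or_eq_dec _ _ (Rle_abs (- z))) as [h|h];
     [left; apply exp_increasing, h | right; f_equal; exact h]. }
  pose proof (exp_pos z). pose proof (exp_pos (- z)).
  unfold ch, sh. split; apply Rabs_le; split; lra.
Qed.
Lemma ch_bnd : forall k z, Rabs (Derive_n ch k z) <= exp (Rabs z).
Proof.
  intros k z. apply (pair_bound ch sh 1 d_ch d_sh (fun z => exp (Rabs z)) Rabs_R1).
  intros u. destruct (chsh_le u). split; assumption.
Qed.
Lemma sh_bnd : forall k z, Rabs (Derive_n sh k z) <= exp (Rabs z).
Proof.
  intros k z. apply (pair_bound sh ch 1 d_sh2 d_ch2 (fun z => exp (Rabs z)) Rabs_R1).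
  intros u. destruct (chsh_le u). split; assumption.
Qed.



Definition H (w : R) := exp (- (PI * w)) * (16 * PI ^ 2 * w ^ 2 - 24 * PI * w).

Lemma G_term_eq t n : G_term t n = exp t * H (INR n ^ 2 * exp (4 * t)).
Proof.
  unfold G_term, H.
  replace (t - PI * INR n ^ 2 * exp (4 * t)) with (t + - (PI * (INR n ^ 2 * exp (4 * t)))) by ring.
  rewrite exp_plus.
  replace (8 * t) with (4 * t + 4 * t) by ring. rewrite exp_plus. ring.
Qed.

Lemma exp_INR n a : exp (INR n * a) = exp a ^ n.
Proof.
  induction n. simpl. rewrite Rmult_0_l; apply exp_0.
  rewrite S_INR. replace ((INR n + 1) * a) with (INR n * a + a) by ring.
  rewrite exp_plus, IHn. simpl; ring.
Qed.

Lemma H_bound w : 0 <= w -> Rabs (H w) <= 176 * exp (- (PI * w / 2)).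
Proof.
  intros Hw. unfold H. pose proof PI_RGT_0 as Hpi.
  set (a := PI * w / 2).
  assert (Ha : 0 <= a) by (unfold a; nra).
  pose proof (exp_ge_pow a 1 Ha) as E1. pose proof (exp_ge_pow a 2 Ha) as E2.
  simpl in E1, E2. 
  assert (Hf : 0 < 1 * 1) by lra.
  replace (1 * 1) with 1 in E1 by ring.
  replace (INR (2 * 1)) with 2 in E2 by (simpl; ring).
  assert (Hb : Rabs (16 * PI ^ 2 * w ^ 2 - 24 * PI * w) <= 176 * exp a).
  { apply Rabs_le. unfold a in *. split; nra. }
  rewrite Rabs_mult, Rabs_pos_eq by (left; apply exp_pos).
  replace (- (PI * w)) with (- a + - a) by (unfold a; field).
  rewrite exp_plus.
  replace (- (PI * w / 2)) with (- a) by (unfold a; field).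
  assert (exp (- a) * exp a = 1) by (rewrite <- exp_plus; replace (-a + a) with 0 by ring; apply exp_0).
  pose proof (exp_pos (-a)).
  apply Rle_trans with (exp (- a) * exp (- a) * (176 * exp a)).
  apply Rmult_le_compat_l. nra. exact Hb. nra.
Qed.

Lemma H_pos w : 1 <= w -> 0 <= H w.
Proof.
  intros Hw. unfold H. pose proof PI2_1. pose proof (exp_pos (- (PI * w))).
  apply Rmult_le_pos. lra.
  replace (16 * PI ^ 2 * w ^ 2 - 24 * PI * w) with (8 * PI * w * (2 * PI * w - 3)) by ring.
  apply Rmult_le_pos. nra. nra.
Qed.

Lemma exp_le x y : x <= y -> exp x <= exp y.
Proof. intros [H|H]. left; apply exp_increasing, H. subst; lra. Qed.

Lemma nat_above x : exists n : nat, x < INR n.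
Proof.
  destruct (archimed x) as [H1 _].
  destruct (Z_le_gt_dec 0 (up x)) as [Hz|Hz].
  - exists (Z.to_nat (up x)). rewrite INR_IZR_INZ, Z2Nat.id by lia. lra.
  - exists 0%nat. simpl. apply Rlt_trans with (IZR (up x)). lra. apply IZR_lt. lia.
Qed.

Lemma L1 r t n : 0 < r -> Rabs t < r ->
  Rabs (G_term t (S n)) <= 176 * exp r * exp (- (PI * exp (- (4 * r)) / 2)) ^ n.
Proof.
  intros Hr Ht. rewrite G_term_eq. set (N := INR (S n)).
  assert (HN : 1 <= N) by (unfold N; rewrite S_INR; pose proof (pos_INR n); lra).
  set (E := exp (4 * t)). set (c := exp (- (4 * r))).
  assert (Hc : 0 < c) by apply exp_pos.
  pose proof (Rabs_def2 _ _ Ht) as [Ht1 Ht2].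
  assert (HE : c <= E) by (unfold c, E; apply exp_le; lra).
  pose proof PI_RGT_0 as Hpi.
  assert (Hw1 : N * c <= N * E) by (apply Rmult_le_compat_l; lra).
  assert (Hw2 : N * E <= N ^ 2 * E) by (simpl; rewrite Rmult_1_r; apply Rmult_le_compat_r; nra).
  assert (Hw : N * c <= N ^ 2 * E) by lra.
  rewrite Rabs_mult, Rabs_pos_eq by (left; apply exp_pos).
  apply Rle_trans with (exp r * (176 * exp (- (PI * (N ^ 2 * E) / 2)))).
  apply Rmult_le_compat. left; apply exp_pos. apply Rabs_pos. apply exp_le; lra.
  apply H_bound. nra.
  pose proof (exp_pos r).
  rewrite <- Rmult_assoc, (Rmult_comm (exp r)). apply Rmult_le_compat_l. nra.
  rewrite <- exp_INR. apply exp_le.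
  assert (HN2 : N = INR n + 1) by (unfold N; apply S_INR).
  assert (INR n * c <= N * c) by (apply Rmult_le_compat_r; lra).
  nra.
Qed.

Lemma L2 p t n : 0 <= t ->
  0 <= G_term t (S n) <= 176 * exp t * (INR (fact p) * (2 / PI) ^ p * exp (- (4 * INR p * t))) * exp (- (PI / 2)) ^ n.
Proof.
  intros Ht. rewrite G_term_eq. set (N := INR (S n)).
  assert (HN : N = INR n + 1) by (unfold N; apply S_INR).
  pose proof (pos_INR n) as Hn.
  set (E := exp (4 * t)).
  assert (HE : 1 <= E) by (unfold E; rewrite <- exp_0; apply exp_le; lra).
  pose proof PI_RGT_0 as Hpi.
  assert (Hw : INR n + E <= N ^ 2 * E) by (rewrite HN; nra).
  split. apply Rmult_le_pos. left; apply exp_pos. apply H_pos. nra.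
  apply Rle_trans with (exp t * Rabs (H (N ^ 2 * E))). apply Rmult_le_compat_l. left; apply exp_pos. apply Rle_abs.
  apply Rle_trans with (exp t * (176 * exp (- (PI * (N ^ 2 * E) / 2)))).
  apply Rmult_le_compat_l. left; apply exp_pos. apply H_bound. nra.
  apply Rle_trans with (exp t * (176 * (exp (- (PI * E / 2)) * exp (- (PI/2)) ^ n))).
  { apply Rmult_le_compat_l. left; apply exp_pos. apply Rmult_le_compat_l. lra.
    rewrite <- exp_INR, <- exp_plus. apply exp_le. nra. }
  assert (Hk : exp (- (PI * E / 2)) <= INR (fact p) * (2 / PI) ^ p * exp (- (4 * INR p * t))).
  { assert (Ha : 0 <= PI * E / 2) by nra.
    pose proof (exp_ge_pow _ p Ha) as Hg.
    pose proof (INR_fact_lt_0 p) as Hf.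
    assert (Hpe : (PI * E / 2) ^ p = (PI / 2) ^ p * exp (4 * INR p * t)).
    { replace (PI * E / 2) with (PI/2 * E) by (unfold Rdiv; ring).
      rewrite Rpow_mult_distr. unfold E. rewrite <- exp_INR. replace (4 * INR p * t) with (INR p * (4 * t)) by ring. reflexivity. }
    assert (Hp2 : 0 < (PI/2)^p) by (apply pow_lt; lra).
    assert (Hap : 0 < (PI * E / 2) ^ p) by (rewrite Hpe; pose proof (exp_pos (4 * INR p * t)); nra).
    assert (Hq : 0 < (PI * E / 2) ^ p / INR (fact p)) by (apply Rdiv_lt_0_compat; lra).
    rewrite exp_Ropp. eapply Rle_trans. apply Rinv_le_contravar. exact Hq. exact Hg.
    rewrite Hpe. replace (2 / PI) with (/ (PI / 2)) by (field; lra). rewrite pow_inv, exp_Ropp.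
    right. field. split. apply Rgt_not_eq, exp_pos. lra. }
  assert (0 <= exp (- (PI / 2)) ^ n) by (apply pow_le; left; apply exp_pos).
  pose proof (exp_pos t). pose proof (exp_pos (- (PI * E / 2))).
  apply Rle_trans with (exp t * (176 * ((INR (fact p) * (2 / PI) ^ p * exp (- (4 * INR p * t))) * exp (- (PI / 2)) ^ n))).
  apply Rmult_le_compat_l; [lra|]. apply Rmult_le_compat_l; [lra|]. apply Rmult_le_compat_r; [lra| exact Hk].
  right; ring.
Qed.


Lemma expneg_lt1 x : 0 < x -> Rabs (exp (- x)) < 1.
Proof.
  intros Hx. rewrite Rabs_pos_eq by (left; apply exp_pos). rewrite <- exp_0. apply exp_increasing. lra.
Qed.

Lemma ex_geom_scal K q : Rabs q < 1 -> ex_series (fun n => K * q ^ n).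
Proof. intros Hq. apply (ex_series_scal_l K (fun n => q ^ n)). apply ex_series_geom, Hq. Qed.

Lemma Series_geom_scal K q : Rabs q < 1 -> Series (fun n => K * q ^ n) = K / (1 - q).
Proof. intros Hq. rewrite Series_scal_l, Series_geom by exact Hq. unfold Rdiv. ring. Qed.

Lemma q_loc_lt1 r : Rabs (exp (- (PI * exp (- (4 * r)) / 2))) < 1.
Proof. apply expneg_lt1. pose proof PI_RGT_0. pose proof (exp_pos (- (4*r))). nra. Qed.

Lemma G_ex_series t : ex_series (fun k => G_term t (S k)).
Proof.
  set (r := Rabs t + 1).
  apply (@ex_series_le R_AbsRing R_CompleteNormedModule _ (fun n => 176 * exp r * exp (- (PI * exp (- (4 * r)) / 2)) ^ n)).
  intros n. change (Rabs (G_term t (S n)) <= 176 * exp r * exp (- (PI * exp (- (4 * r)) / 2)) ^ n).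
  apply L1; unfold r; pose proof (Rabs_pos t); lra.
  apply ex_geom_scal, q_loc_lt1.
Qed.

Lemma Series_nonneg (a : nat -> R) : (forall n, 0 <= a n) -> ex_series a -> 0 <= Series a.
Proof.
  intros Ha He. replace 0 with (Series (fun n => 0 * a n)).
  apply Series_le. intros n; split. right; ring. rewrite Rmult_0_l; apply Ha. exact He.
  rewrite Series_scal_l. ring.
Qed.

Lemma G_lower t : 0 <= t -> G_term t 1 <= G t.
Proof.
  intros Ht. unfold G. rewrite Series_incr_1 by apply G_ex_series.
  assert (0 <= Series (fun k => G_term t (S (S k)))).
  { apply Series_nonneg. intros n; apply (L2 0 t (S n) Ht).
    destruct (ex_series_incr_1 (fun k => G_term t (S k))) as [H1 _]. apply H1, G_ex_series. }
  lra.
Qed.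

Lemma G_decay L : exists C, 0 <= C /\ forall t, 0 <= t -> 0 <= G t /\ G t * exp (L * t) <= C * exp (- t).
Proof.
  destruct (nat_above (L + 2)) as [p Hp].
  set (q := exp (- (PI / 2))).
  assert (Hq : Rabs q < 1) by (apply expneg_lt1; pose proof PI_RGT_0; lra).
  assert (Hq' : 0 < q < 1) by (pose proof (exp_pos (- (PI/2))); unfold q in *; rewrite Rabs_pos_eq in Hq; lra).
  set (Kp := INR (fact p) * (2 / PI) ^ p).
  assert (HKp : 0 <= Kp) by (unfold Kp; apply Rmult_le_pos; [left; apply INR_fact_lt_0| apply pow_le; pose proof PI_RGT_0; left; apply Rdiv_lt_0_compat; lra]).
  exists (176 * Kp / (1 - q)). split. apply Rdiv_le_0_compat; lra.
  intros t Ht.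
  set (B := 176 * exp t * (Kp * exp (- (4 * INR p * t)))).
  assert (HG : 0 <= G t <= B / (1 - q)).
  { unfold G. split. apply Series_nonneg. intros n; apply (L2 p t n Ht). apply G_ex_series.
    rewrite <- Series_geom_scal by exact Hq. apply Series_le. intros n. apply (L2 p t n Ht).
    apply ex_geom_scal, Hq. }
  split. lra.
  assert (HB : B * exp (L * t) <= 176 * Kp * exp (- t)).
  { unfold B. 
    replace (176 * exp t * (Kp * exp (- (4 * INR p * t))) * exp (L * t)) with (176 * Kp * exp (t + - (4 * INR p * t) + L * t))
      by (rewrite !exp_plus; ring).
    apply Rmult_le_compat_l. lra. apply exp_le. pose proof (pos_INR p). nra. }
  pose proof (exp_pos (L * t)).
  apply Rle_trans with (B / (1 - q) * exp (L * t)). apply Rmult_le_compat_r; lra.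
  replace (176 * Kp / (1 - q) * exp (- t)) with ((176 * Kp * exp (- t)) / (1 - q)) by (field; lra).
  replace (B / (1 - q) * exp (L * t)) with ((B * exp (L * t)) / (1 - q)) by (field; lra).
  apply Rmult_le_compat_r. left; apply Rinv_0_lt_compat; lra. exact HB.
Qed.

Definition fnG (k : nat) (t : R) := G_term t (S k).

Lemma fnG_cv x : Un_cv (fun N => SP fnG N x) (G x).
Proof.
  pose proof (Series_correct _ (G_ex_series x)) as H.
  apply is_series_Reals in H. exact H.
Qed.

Definition cvG : forall x : R, {l : R | Un_cv (fun N => SP fnG N x) l} :=
  fun x => exist _ (G x) (fnG_cv x).

Lemma G_term_cont t n : continuity_pt (fun t => G_term t n) t.
Proof.
  apply continuity_pt_filterlim. apply (ex_derive_continuous (V := R_NormedModule) (fun t => G_term t n)). unfold G_term. auto_derive. auto.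
Qed.

Lemma G_cont t : continuous G t.
Proof.
  apply continuity_pt_filterlim.
  set (r := mkposreal (Rabs t + 1) ltac:(pose proof (Rabs_pos t); lra)).
  assert (Hcvn : CVN_r fnG r).
  { exists (fun n => 176 * exp r * exp (- (PI * exp (- (4 * r)) / 2)) ^ n).
    exists (Series (fun n => 176 * exp r * exp (- (PI * exp (- (4 * r)) / 2)) ^ n)).
    split.
    - apply is_series_Reals.
      apply (is_series_ext (fun n => 176 * exp r * exp (- (PI * exp (- (4 * r)) / 2)) ^ n)).
      intros n. symmetry. apply Rabs_pos_eq. apply Rmult_le_pos. pose proof (exp_pos r); lra.
      apply pow_le; left; apply exp_pos.
      apply Series_correct, ex_geom_scal, q_loc_lt1.
    - intros n y Hy. unfold Boule in Hy. rewrite Rminus_0_r in Hy. unfold fnG. apply L1.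
      simpl; pose proof (Rabs_pos t); lra. exact Hy. }
  pose proof (CVN_CVU fnG cvG r Hcvn) as Hu.
  assert (Hc : continuity_pt (SFL fnG cvG) t).
  { apply (CVU_continuity _ _ 0 r Hu).
    intros n y _. apply continuity_pt_finite_SF. intros k _ . unfold fnG. apply G_term_cont.
    unfold Boule. rewrite Rminus_0_r. simpl; lra. }
  exact Hc.
Qed.


Lemma ballR (x y : R) (e : R) : ball x e y <-> Rabs (y - x) < e.
Proof. reflexivity. Qed.

Lemma RIexp K a b : is_RInt (fun t => K * exp (- t)) a b (K * exp (- a) - K * exp (- b)).
Proof.
  replace (K * exp (- a) - K * exp (- b)) with (minus ((fun t => - K * exp (- t)) b) ((fun t => - K * exp (- t)) a)).
  apply (is_RInt_derive (V := R_CompleteNormedModule) (fun t => - K * exp (- t)) (fun t => K * exp (- t))).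
  intros x _. auto_derive. auto. ring.
  intros x _. apply (ex_derive_continuous (V := R_NormedModule) (fun t => K * exp (- t))). auto_derive. auto.
  unfold minus, plus, opp; simpl. ring.
Qed.

Lemma lim_ge (F : R -> R) l c : filterlim F (Rbar_locally p_infty) (locally l) ->
  (exists M, forall b, M < b -> c <= F b) -> c <= l.
Proof.
  intros HF [M HM]. destruct (Rle_or_lt c l) as [H|H]. exact H. exfalso.
  assert (He : 0 < c - l) by lra.
  destruct (HF (ball l (mkposreal _ He)) (locally_ball l (mkposreal _ He))) as [M' HM'].
  pose proof (Rmax_r M M'). pose proof (Rmax_l M M').
  specialize (HM' (Rmax M M' + 1)). specialize (HM (Rmax M M' + 1)).
  assert (M' < Rmax M M' + 1) by lra. assert (M < Rmax M M' + 1) by lra.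
  specialize (HM' ltac:(assumption)). specialize (HM ltac:(assumption)).
  assert (HB : Rabs (F (Rmax M M' + 1) - l) < c - l) by exact HM'. destruct (Rabs_def2 _ _ HB). lra.
Qed.

Lemma lim_le (F : R -> R) l c : filterlim F (Rbar_locally p_infty) (locally l) ->
  (exists M, forall b, M < b -> F b <= c) -> l <= c.
Proof.
  intros HF [M HM]. destruct (Rle_or_lt l c) as [H|H]. exact H. exfalso.
  assert (He : 0 < l - c) by lra.
  destruct (HF (ball l (mkposreal _ He)) (locally_ball l (mkposreal _ He))) as [M' HM'].
  pose proof (Rmax_r M M'). pose proof (Rmax_l M M').
  specialize (HM' (Rmax M M' + 1)). specialize (HM (Rmax M M' + 1)).
  assert (M' < Rmax M M' + 1) by lra. assert (M < Rmax M M' + 1) by lra.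
  specialize (HM' ltac:(assumption)). specialize (HM ltac:(assumption)).
  assert (HB : Rabs (F (Rmax M M' + 1) - l) < l - c) by exact HM'. destruct (Rabs_def2 _ _ HB). lra.
Qed.

Lemma RPML (u v : R) : u + v - u = v. Proof. ring. Qed.

Lemma ML (f : R -> R) (K : R) : 0 <= K -> (forall t, continuous f t) ->
  (forall t, 0 <= t -> Rabs (f t) <= K * exp (- t)) ->
  exists l, is_RInt_gen f (at_point 0) (Rbar_locally p_infty) l /\
    filterlim (fun b => RInt f 0 b) (Rbar_locally p_infty) (locally l) /\ Rabs l <= K.
Proof.
  intros HK Hc Hb.
  assert (Hex : forall a b, ex_RInt f a b) by (intros; apply (ex_RInt_continuous (V := R_CompleteNormedModule)); intros; apply Hc).
  assert (Hseg : forall a b, 0 <= a <= b -> Rabs (RInt f a b) <= K * exp (- a) - K * exp (- b)).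
  { intros a b Hab. apply (norm_RInt_le f (fun t => K * exp (- t)) a b). lra.
    intros x Hx. apply Hb. lra. apply (RInt_correct (V := R_CompleteNormedModule)), Hex. apply RIexp. }
  set (F := fun b => RInt f 0 b).
  assert (HF : forall a b, 0 <= a <= b -> Rabs (F b - F a) <= K * exp (- a)).
  { intros a b Hab. unfold F. rewrite <- (RInt_Chasles (V := R_CompleteNormedModule) f 0 a b) by apply Hex.
    change (plus (RInt f 0 a) (RInt f a b)) with (RInt f 0 a + RInt f a b).
    rewrite RPML.
    eapply Rle_trans. apply Hseg, Hab. pose proof (exp_pos (- b)). nra. }
  set (FF := filtermap F (Rbar_locally p_infty)).
  assert (HPF : ProperFilter FF) by (apply filtermap_proper_filter, Rbar_locally_filter).
  assert (Hcau : cauchy FF).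
  { intros eps. set (M := K / eps + 1).
    assert (HM : 0 < M) by (unfold M; pose proof (cond_pos eps); assert (0 <= K / eps) by (apply Rdiv_le_0_compat; lra); lra).
    exists (F M). unfold FF, filtermap. exists M. intros b Hbm. apply ballR.
    eapply Rle_lt_trans. apply HF. lra.
    pose proof (exp_ineq1 M ltac:(lra)). pose proof (cond_pos eps).
    rewrite exp_Ropp. apply (Rmult_lt_reg_r (exp M)). apply exp_pos.
    rewrite Rmult_assoc, Rinv_l by (apply Rgt_not_eq, exp_pos).
    assert (K < eps * M) by (unfold M; field_simplify; [| lra]; unfold Rdiv; nra).
    nra. }
  set (l := lim FF).
  assert (Hlim : filterlim F (Rbar_locally p_infty) (locally l)).
  { intros P [eps HP]. pose proof (complete_cauchy FF HPF Hcau eps) as H.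
    unfold FF, filtermap in H. eapply filter_imp. 2: exact H. intros x Hx. apply HP, Hx. }
  exists l. split; [|split].
  - unfold is_RInt_gen, filterlimi, filter_le, filtermapi. intros P HP.
    apply Filter_prod with (fun a => a = 0) (fun b => P (F b)). reflexivity.
    apply Hlim, HP. intros a b -> Hb'. exists (F b). split. apply (RInt_correct (V := R_CompleteNormedModule)), Hex. exact Hb'.
  - exact Hlim.
  - assert (HFb : forall b, 0 < b -> Rabs (F b) <= K).
    { intros b Hb'. replace (F b) with (F b - F 0). eapply Rle_trans. apply HF. lra.
      rewrite Ropp_0, exp_0. lra. unfold F. rewrite RInt_point. apply Rminus_0_r. }
    apply Rabs_le. split.
    + apply (lim_ge F). exact Hlim. exists 0. intros b Hb'. specialize (HFb b Hb'). destruct (proj1 (Rabs_le_between _ _) HFb). lra.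
    + apply (lim_le F). exact Hlim. exists 0. intros b Hb'. specialize (HFb b Hb'). destruct (proj1 (Rabs_le_between _ _) HFb). lra.
Qed.


Notation F0 := (at_point 0).
Notation Finf := (Rbar_locally p_infty).

Lemma contG (h : R -> R) : (forall t, ex_derive h t) -> forall t, continuous (fun t => G t * h t) t.
Proof.
  intros Hh t. apply (continuous_mult (K := R_AbsRing) G h). apply G_cont.
  apply (ex_derive_continuous (V := R_NormedModule)). apply Hh.
Qed.

Lemma isg_sum (g : nat -> R -> R) (I a : nat -> R) n :
  (forall m, is_RInt_gen (g m) F0 Finf (I m)) ->
  is_RInt_gen (fun t => sum_f_R0 (fun m => a m * g m t) n) F0 Finf (sum_f_R0 (fun m => a m * I m) n).
Proof.
  intros Hg. induction n; simpl.
  - exact (is_RInt_gen_scal (V := R_NormedModule) (g 0%nat) (a 0%nat) (I 0%nat) (Hg 0%nat)).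
  - exact (is_RInt_gen_plus (V := R_NormedModule) _ _ _ _ IHn
      (is_RInt_gen_scal (V := R_NormedModule) (g (S n)) (a (S n)) (I (S n)) (Hg (S n)))).
Qed.

Lemma isg_pair (f1 f2 : R -> R) l1 l2 :
  is_RInt_gen f1 F0 Finf l1 -> is_RInt_gen f2 F0 Finf l2 ->
  is_RInt_gen (V := C_R_NormedModule) (fun t => (f1 t, f2 t)) F0 Finf (l1, l2).
Proof.
  intros H1 H2 P [eps HP].
  specialize (H1 (ball l1 eps) (locally_ball l1 eps)).
  specialize (H2 (ball l2 eps) (locally_ball l2 eps)).
  unfold filtermapi in *.
  generalize (filter_and _ _ H1 H2). apply filter_imp.
  intros [a b] [[v1 [Hv1 Hb1]] [v2 [Hv2 Hb2]]].
  exists (v1, v2). split.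
  - apply (is_RInt_fct_extend_pair (U := R_NormedModule) (V := R_NormedModule)); simpl; assumption.
  - apply HP. split; assumption.
Qed.

Lemma integrand_eq x y t :
  Cmult (RtoC (G t)) (Ccosh (Cmult (x, y) (RtoC t))) = (G t * cos (y * t) * ch (x * t), G t * sin (y * t) * sh (x * t)).
Proof.
  unfold Ccosh, Cexp, Cmult, Cplus, Copp, RtoC, ch, sh; simpl.
  replace (x * t - y * 0) with (x * t) by ring.
  replace (x * 0 + y * t) with (y * t) by ring.
  rewrite cos_neg, sin_neg.
  f_equal; field.
Qed.

Lemma eta_eq x y l1 l2 :
  is_RInt_gen (fun t => G t * cos (y * t) * ch (x * t)) F0 Finf l1 ->
  is_RInt_gen (fun t => G t * sin (y * t) * sh (x * t)) F0 Finf l2 ->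
  eta (x, y) = (l1, l2).
Proof.
  intros H1 H2. unfold eta.
  rewrite (functional_extensionality _ _ (integrand_eq x y)).
  apply (is_RInt_gen_unique (V := C_R_CompleteNormedModule)).
  exact (isg_pair _ _ _ _ H1 H2).
Qed.


Lemma sum_zero (f : nat -> R) n : (forall m, (m <= n)%nat -> f m = 0) -> sum_f_R0 f n = 0.
Proof.
  induction n; intros Hf; simpl. apply Hf; lia. rewrite IHn. rewrite (Hf (S n)) by lia. ring. intros; apply Hf; lia.
Qed.

Lemma sum_last (f : nat -> R) m : (forall k, (k < m)%nat -> f k = 0) -> sum_f_R0 f m = f m.
Proof.
  destruct m; intros Hf; simpl. reflexivity.
  rewrite sum_zero. ring. intros; apply Hf; lia.
Qed.

Lemma sum_pt (c : nat -> R) (P a t : R) n :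
  P * sum_f_R0 (fun m => (a * t) ^ m / INR (fact m) * c m) n =
  sum_f_R0 (fun m => (a ^ m / INR (fact m) * c m) * (P * t ^ m)) n.
Proof.
  induction n; simpl sum_f_R0.
  - simpl. unfold Rdiv; ring.
  - rewrite Rmult_plus_distr_l, IHn. rewrite Rpow_mult_distr. unfold Rdiv; ring.
Qed.

Lemma pow_fact_le t k : 0 <= t -> t ^ k <= INR (fact k) * exp t.
Proof.
  intros Ht. pose proof (exp_ge_pow t k Ht). pose proof (INR_fact_lt_0 k).
  apply (Rmult_le_reg_r (/ INR (fact k))). apply Rinv_0_lt_compat; lra.
  replace (INR (fact k) * exp t * / INR (fact k)) with (exp t) by (field; lra). exact H0.
Qed.

Lemma half_bound a t N : 0 <= a -> 0 <= t ->
  (a * t) ^ N / INR (fact N) <= (/2) ^ N * exp (2 * a * t).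
Proof.
  intros Ha Ht. pose proof (exp_ge_pow (2 * a * t) N ltac:(nra)).
  replace ((a * t) ^ N) with ((/2) ^ N * (2 * a * t) ^ N).
  unfold Rdiv. rewrite Rmult_assoc. apply Rmult_le_compat_l. apply pow_le; lra. exact H0.
  rewrite <- Rpow_mult_distr. f_equal. field.
Qed.

Lemma bound_by_exp (f : R -> R) l K : 0 <= K -> is_RInt_gen f F0 Finf l ->
  (forall t, 0 <= t -> Rabs (f t) <= K * exp (- t)) -> Rabs l <= K.
Proof.
  intros HK Hf Hb.
  destruct (ML (fun t => K * exp (- t)) K HK) as [lg [Hg [_ Hlg]]].
  - intros t. apply (ex_derive_continuous (V := R_NormedModule) (fun t => K * exp (- t))). auto_derive. auto.
  - intros t _. rewrite Rabs_pos_eq. lra. pose proof (exp_pos (- t)). nra.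
  - apply Rle_trans with lg.
    + apply (RInt_gen_norm (V := R_CompleteNormedModule) (Fa := F0) (Fb := Finf) f (fun t => K * exp (- t)) l lg).
      * apply Filter_prod with (fun a => a = 0) (fun b => 0 < b). reflexivity. exists 0. tauto.
        intros a b -> Hb'. simpl; lra.
      * apply Filter_prod with (fun a => a = 0) (fun b => 0 < b). reflexivity. exists 0. tauto.
        intros a b -> Hb' x Hx. apply Hb. simpl in Hx; lra.
      * exact Hf.
      * exact Hg.
    + apply Rabs_le_between in Hlg. lra.
Qed.

Lemma ex_min (P : nat -> Prop) : (exists k, P k) -> exists m, P m /\ forall k, (k < m)%nat -> ~ P k.
Proof.
  intros [k Hk]. revert Hk. induction k as [k IH] using (well_founded_induction lt_wf). intros Hk.
  destruct (classic (exists j, (j < k)%nat /\ P j)) as [[j [Hj1 Hj2]]|Hn].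
  - exact (IH j Hj1 Hj2).
  - exists k. split. exact Hk. intros j Hj HP. apply Hn. exists j. tauto.
Qed.

Definition gc y k t := G t * cos (y * t) * t ^ k.
Definition gs y k t := G t * sin (y * t) * t ^ k.
Definition Pc y k := RInt_gen (gc y k) F0 Finf.
Definition Qs y k := RInt_gen (gs y k) F0 Finf.

Lemma G_poly_bound k t C : 0 <= t -> 0 <= G t -> G t * exp (1 * t) <= C * exp (- t) ->
  G t * t ^ k <= INR (fact k) * C * exp (- t).
Proof.
  intros Ht HG HC. rewrite Rmult_1_l in HC. pose proof (pow_fact_le t k Ht).
  apply Rle_trans with (G t * (INR (fact k) * exp t)). apply Rmult_le_compat_l; lra.
  pose proof (INR_fact_lt_0 k). rewrite Rmult_assoc. 
  replace (G t * (INR (fact k) * exp t)) with (INR (fact k) * (G t * exp t)) by ring.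
  apply Rmult_le_compat_l; lra.
Qed.

Lemma gc_isg y k : is_RInt_gen (gc y k) F0 Finf (Pc y k).
Proof.
  destruct (G_decay 1) as [C [HC HG]].
  destruct (ML (gc y k) (INR (fact k) * C)) as [l [Hl _]].
  - pose proof (INR_fact_lt_0 k). nra.
  - intros t. apply (continuous_ext (fun t => G t * (cos (y * t) * t ^ k))). intros; unfold gc; symmetry; apply Rmult_assoc.
    apply contG. intros; auto_derive; auto.
  - intros t Ht. destruct (HG t Ht) as [HG0 HG1].
    unfold gc. rewrite !Rabs_mult, (Rabs_pos_eq (G t)) by exact HG0.
    rewrite (Rabs_pos_eq (t ^ k)) by (apply pow_le; exact Ht).
    apply Rle_trans with (G t * t ^ k). 
    pose proof (COS_bound (y * t)) as Hcb. assert (Rabs (cos (y * t)) <= 1) by (apply Rabs_le; lra).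
    pose proof (pow_le t k Ht). 
    replace (G t * t ^ k) with (G t * 1 * t ^ k) by ring.
    apply Rmult_le_compat_r. lra. apply Rmult_le_compat_l; lra.
    apply G_poly_bound; assumption.
  - unfold Pc. apply (RInt_gen_correct (V := R_CompleteNormedModule)). exists l; exact Hl.
Qed.

Lemma gs_isg y k : is_RInt_gen (gs y k) F0 Finf (Qs y k).
Proof.
  destruct (G_decay 1) as [C [HC HG]].
  destruct (ML (gs y k) (INR (fact k) * C)) as [l [Hl _]].
  - pose proof (INR_fact_lt_0 k). nra.
  - intros t. apply (continuous_ext (fun t => G t * (sin (y * t) * t ^ k))). intros; unfold gs; symmetry; apply Rmult_assoc.
    apply contG. intros; auto_derive; auto.
  - intros t Ht. destruct (HG t Ht) as [HG0 HG1].
    unfold gs. rewrite !Rabs_mult, (Rabs_pos_eq (G t)) by exact HG0.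
    rewrite (Rabs_pos_eq (t ^ k)) by (apply pow_le; exact Ht).
    apply Rle_trans with (G t * t ^ k). 
    pose proof (SIN_bound (y * t)) as Hcb. assert (Rabs (sin (y * t)) <= 1) by (apply Rabs_le; lra).
    pose proof (pow_le t k Ht). 
    replace (G t * t ^ k) with (G t * 1 * t ^ k) by ring.
    apply Rmult_le_compat_r. lra. apply Rmult_le_compat_l; lra.
    apply G_poly_bound; assumption.
  - unfold Qs. apply (RInt_gen_correct (V := R_CompleteNormedModule)). exists l; exact Hl.
Qed.

Lemma G_pos01 : exists c0, 0 < c0 /\ forall t, 0 <= t <= 1 -> c0 <= G t.
Proof.
  exists (exp (- (PI * exp 4)) * (8 * PI * (2 * PI - 3))).
  pose proof PI2_1. pose proof (exp_pos (- (PI * exp 4))). assert (0 < 2 * PI - 3) by lra. assert (0 < 8 * PI * (2 * PI - 3)) by (apply Rmult_lt_0_compat; lra). split. apply Rmult_lt_0_compat; lra.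
  intros t Ht. eapply Rle_trans. 2: apply G_lower; lra.
  rewrite G_term_eq. unfold H. simpl INR. rewrite pow1, Rmult_1_l.
  set (w := exp (4 * t)).
  assert (Hw1 : 1 <= w) by (unfold w; rewrite <- exp_0; apply exp_le; lra).
  assert (Hw2 : w <= exp 4) by (unfold w; apply exp_le; lra).
  assert (He : 1 <= exp t) by (rewrite <- exp_0; apply exp_le; lra).
  assert (Hew : exp (- (PI * exp 4)) <= exp (- (PI * w))) by (apply exp_le; nra).
  replace (16 * PI ^ 2 * w ^ 2 - 24 * PI * w) with (8 * PI * w * (2 * PI * w - 3)) by ring.
  assert (Hp : 8 * PI * (2 * PI - 3) <= 8 * PI * w * (2 * PI * w - 3)) by (apply Rmult_le_compat; nra).
  assert (0 <= 8 * PI * (2 * PI - 3)) by nra.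
  apply Rle_trans with (exp (- (PI * w)) * (8 * PI * w * (2 * PI * w - 3))).
  apply Rmult_le_compat; lra.
  pose proof (exp_pos (- (PI * w))). 
  replace (exp (- (PI * w)) * (8 * PI * w * (2 * PI * w - 3))) with (1 * (exp (- (PI * w)) * (8 * PI * w * (2 * PI * w - 3)))) at 1 by ring.
  apply Rmult_le_compat_r. nra. exact He.
Qed.

Lemma I0_pos : exists I0 : R, is_RInt_gen G F0 Finf I0 /\ 0 < I0.
Proof.
  destruct (G_decay 1) as [C [HC HG]].
  destruct (ML G C HC) as [l [Hl [Hlim _]]].
  - apply G_cont.
  - intros t Ht. destruct (HG t Ht) as [HG0 HG1]. rewrite Rabs_pos_eq by exact HG0.
    eapply Rle_trans. 2: exact HG1. rewrite Rmult_1_l. pose proof (exp_ge_pow t 0 Ht). simpl in H0.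
    replace (G t) with (G t * 1) at 1 by ring. apply Rmult_le_compat_l; lra.
  - exists l. split. exact Hl.
    destruct G_pos01 as [c0 [Hc0 Hc]].
    apply Rlt_le_trans with c0. exact Hc0.
    apply (lim_ge _ _ _ Hlim). exists 1. intros b Hb.
    assert (Hex : forall a b, ex_RInt G a b) by (intros; apply (ex_RInt_continuous (V := R_CompleteNormedModule)); intros; apply G_cont).
    rewrite <- (RInt_Chasles (V := R_CompleteNormedModule) G 0 1 b) by apply Hex.
    change (plus (RInt G 0 1) (RInt G 1 b)) with (RInt G 0 1 + RInt G 1 b).
    assert (0 <= RInt G 1 b).
    { apply RInt_ge_0. lra. apply Hex. intros x Hx. apply (HG x). lra. }
    assert (c0 <= RInt G 0 1).
    { replace c0 with (RInt (fun _ => c0) 0 1).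
      apply RInt_le. lra. apply (ex_RInt_const (V := R_CompleteNormedModule)). apply Hex. intros x Hx. apply Hc. lra.
      rewrite RInt_const. rewrite Rminus_0_r. exact (scal_one (V := R_ModuleSpace) c0). }
    lra.
Qed.

Lemma sigma_ex y : exists s, Rabs s = 1 /\ s * s = 1 /\
  forall u, sin (y * u) = s * sin (Rabs y * u) /\ cos (y * u) = cos (Rabs y * u).
Proof.
  destruct (Rle_or_lt 0 y) as [Hy|Hy].
  - exists 1. rewrite Rabs_R1, Rabs_pos_eq by exact Hy. split; [|split]; [reflexivity| ring |]. intros u; split; ring.
  - exists (-1). split. rewrite Rabs_left; lra. split. ring.
    rewrite (Rabs_left y Hy). intros u. replace (y * u) with (- (- y * u)) by ring. rewrite sin_neg, cos_neg. split; ring.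
Qed.

Lemma case2 y : (forall k, Derive_n ch k 0 * Pc y k = 0 /\ Derive_n sh k 0 * Qs y k = 0) -> False.
Proof.
  intros Hz.
  assert (Hc : forall k, Derive_n cos k 0 * Pc y k = 0).
  { intros k. destruct (coef_cos k) as [l ->]. rewrite Rmult_assoc, (proj1 (Hz k)). ring. }
  assert (Hs : forall k, Derive_n sin k 0 * Qs y k = 0).
  { intros k. destruct (coef_sin k) as [l ->]. rewrite Rmult_assoc, (proj2 (Hz k)). ring. }
  destruct I0_pos as [I0 [HI0 HI0p]].
  destruct (G_decay (2 * Rabs y)) as [C [HC HG]].
  destruct (sigma_ex y) as [sg [Hsg1 [Hsg2 Hsg]]].
  set (a := Rabs y) in *. assert (Ha : 0 <= a) by apply Rabs_pos.
  assert (Hn : forall n, I0 <= 2 * C * (/2) ^ (S n)).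
  { intros n.
    set (ac := fun m => a ^ m / INR (fact m) * Derive_n cos m 0).
    set (as_ := fun m => a ^ m / INR (fact m) * Derive_n sin m 0).
    pose proof (isg_sum (gc y) (Pc y) ac n (gc_isg y)) as HA.
    pose proof (isg_sum (gs y) (Qs y) as_ n (gs_isg y)) as HB.
    rewrite sum_zero in HA by (intros m _; unfold ac; rewrite Rmult_assoc, Hc; ring).
    rewrite sum_zero in HB by (intros m _; unfold as_; rewrite Rmult_assoc, Hs; ring).
    set (A := fun t => sum_f_R0 (fun m => ac m * gc y m t) n) in HA.
    set (B := fun t => sum_f_R0 (fun m => as_ m * gs y m t) n) in HB.
    assert (HR : is_RInt_gen (fun t => G t - (A t + sg * B t)) F0 Finf (I0 - (0 + sg * 0))).
    { exact (is_RInt_gen_minus (V := R_NormedModule) _ _ _ _ HI0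
         (is_RInt_gen_plus (V := R_NormedModule) _ _ _ _ HA (is_RInt_gen_scal (V := R_NormedModule) _ sg _ HB))). }
    assert (HI : forall u : R, u - (0 + sg * 0) = u) by (intros; ring).
    rewrite HI in HR.
    assert (HK : 0 <= 2 * C * (/2) ^ (S n)) by (apply Rmult_le_pos; [lra| apply pow_le; lra]).
    pose proof (bound_by_exp _ _ _ HK HR) as Hbd.
    assert (I0 <= Rabs I0) by apply Rle_abs.
    cut (Rabs I0 <= 2 * C * (/2) ^ (S n)). lra.
    apply Hbd. intros t Ht.
    destruct (HG t Ht) as [HG0 HG1].
    destruct (Hsg t) as [Hst Hct].
    set (Tc := sum_f_R0 (fun m => (a * t) ^ m / INR (fact m) * Derive_n cos m 0) n).
    set (Ts := sum_f_R0 (fun m => (a * t) ^ m / INR (fact m) * Derive_n sin m 0) n).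
    assert (HAt : A t = G t * cos (y * t) * Tc).
    { unfold A, Tc, gc, ac. rewrite sum_pt. reflexivity. }
    assert (HBt : B t = G t * sin (y * t) * Ts).
    { unfold B, Ts, gs, as_. rewrite sum_pt. reflexivity. }
    assert (Hone : cos (y * t) * cos (a * t) + sg * sin (y * t) * sin (a * t) = 1).
    { rewrite Hct, Hst. pose proof (sin2_cos2 (a * t)) as Hsc. unfold Rsqr in Hsc.
      replace (sg * (sg * sin (a * t)) * sin (a * t)) with ((sg * sg) * (sin (a * t) * sin (a * t))) by ring.
      rewrite Hsg2. lra. }
    assert (HRt : G t - (A t + sg * B t) =
       G t * cos (y * t) * (cos (a * t) - Tc) + sg * (G t * sin (y * t) * (sin (a * t) - Ts))).
    { rewrite HAt, HBt. replace (G t) with (G t * (cos (y * t) * cos (a * t) + sg * sin (y * t) * sin (a * t))) at 1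
        by (rewrite Hone; ring). ring. }
    rewrite HRt.
    assert (Hu : 0 <= a * t) by nra.
    pose proof (TLb cos n (a * t) 1 Hu cos_exd (fun z _ => cos_bnd (S n) z)) as E1.
    pose proof (TLb sin n (a * t) 1 Hu sin_exd (fun z _ => sin_bnd (S n) z)) as E2.
    fold Tc in E1. fold Ts in E2.
    pose proof (half_bound a t (S n) Ha Ht) as Hh.
    rewrite Rmult_1_r in E1, E2.
    set (E := (a * t) ^ S n / INR (fact (S n))) in *.
    assert (Hcb : Rabs (cos (y * t)) <= 1) by (apply Rabs_le; apply COS_bound).
    assert (Hsb : Rabs (sin (y * t)) <= 1) by (apply Rabs_le; apply SIN_bound).
    assert (Hstep : Rabs (G t * cos (y * t) * (cos (a * t) - Tc) + sg * (G t * sin (y * t) * (sin (a * t) - Ts)))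
                    <= G t * E + G t * E).
    { eapply Rle_trans. apply Rabs_triang.
      rewrite !Rabs_mult, Hsg1, (Rabs_pos_eq (G t)) by exact HG0.
      pose proof (Rabs_pos (cos (a * t) - Tc)). pose proof (Rabs_pos (sin (a * t) - Ts)).
      pose proof (Rabs_pos (cos (y * t))). pose proof (Rabs_pos (sin (y * t))).
      apply Rplus_le_compat.
      - rewrite Rmult_assoc. apply Rmult_le_compat_l. exact HG0.
        replace E with (1 * E) by ring. apply Rmult_le_compat; assumption.
      - rewrite Rmult_1_l, Rmult_assoc. apply Rmult_le_compat_l. exact HG0.
        replace E with (1 * E) by ring. apply Rmult_le_compat; assumption. }
    eapply Rle_trans. exact Hstep.
    pose proof (pow_le (/2) (S n) ltac:(lra)) as Hp.
    apply Rle_trans with (2 * ((/2) ^ S n * (G t * exp (2 * a * t)))).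
    { replace (G t * E + G t * E) with (2 * (G t * E)) by ring. apply Rmult_le_compat_l. lra.
      replace ((/2) ^ S n * (G t * exp (2 * a * t))) with (G t * ((/2) ^ S n * exp (2 * a * t))) by ring.
      apply Rmult_le_compat_l; assumption. }
    replace (2 * C * (/2) ^ S n * exp (- t)) with (2 * ((/2) ^ S n * (C * exp (- t)))) by ring.
    apply Rmult_le_compat_l. lra. apply Rmult_le_compat_l. exact Hp. exact HG1. }
  destruct (pow_lt_1_zero (/2) ltac:(rewrite Rabs_pos_eq; lra) (I0 / (2 * C + 1))) as [N HN].
  apply Rdiv_lt_0_compat; lra.
  specialize (HN (S N) ltac:(lia)). specialize (Hn N).
  rewrite Rabs_pos_eq in HN by (apply pow_le; lra).
  assert (2 * C * (/2) ^ S N < I0).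
  { apply Rle_lt_trans with ((2 * C + 1) * (/2) ^ S N).
    apply Rmult_le_compat_r. apply pow_le; lra. lra.
    apply (Rmult_lt_compat_l (2 * C + 1)) in HN. 2: lra.
    replace ((2 * C + 1) * (I0 / (2 * C + 1))) with I0 in HN by (field; lra). exact HN. }
  lra.
Qed.

Lemma case1_gen (phi psi : R -> R) (g : nat -> R -> R) (P : nat -> R) y m x C2 :
  (forall k t, g k t = G t * phi (y * t) * t ^ k) ->
  (forall k, is_RInt_gen (g k) F0 Finf (P k)) ->
  (forall u, Rabs (phi u) <= 1) ->
  (forall t k, ex_derive_n psi k t) ->
  (forall k z, Rabs (Derive_n psi k z) <= exp (Rabs z)) ->
  (forall t, continuous (fun t => G t * phi (y * t) * psi (x * t)) t) ->
  0 < x <= 1 -> 0 <= C2 -> (forall t, 0 <= t -> 0 <= G t /\ G t * exp (2 * t) <= C2 * exp (- t)) ->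
  (forall k, (k < m)%nat -> Derive_n psi k 0 * P k = 0) ->
  exists A, is_RInt_gen (fun t => G t * phi (y * t) * psi (x * t)) F0 Finf A /\
    Rabs (A - x ^ m / INR (fact m) * (Derive_n psi m 0 * P m)) <= C2 * x ^ (S m).
Proof.
  intros Hg HP Hphi Hex Hbnd Hcont Hx HC2 HG Hz.
  assert (Hpsi : forall u, 0 <= u -> Rabs (psi u) <= exp u).
  { intros u Hu. pose proof (Hbnd 0%nat u) as Hb. simpl in Hb. rewrite (Rabs_pos_eq u) in Hb by exact Hu. exact Hb. }
  destruct (ML (fun t => G t * phi (y * t) * psi (x * t)) C2 HC2 Hcont) as [A [HA _]].
  { intros t Ht. destruct (HG t Ht) as [HG0 HG1].
    rewrite !Rabs_mult, (Rabs_pos_eq (G t)) by exact HG0.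
    assert (Hxt : 0 <= x * t) by nra.
    pose proof (Hpsi _ Hxt) as H1. pose proof (Hphi (y * t)) as H2.
    assert (exp (x * t) <= exp (2 * t)) by (apply exp_le; nra).
    pose proof (Rabs_pos (phi (y * t))). pose proof (Rabs_pos (psi (x * t))).
    apply Rle_trans with (G t * exp (2 * t)); [|exact HG1].
    rewrite Rmult_assoc. apply Rmult_le_compat_l. exact HG0.
    replace (exp (2 * t)) with (1 * exp (2 * t)) by ring. apply Rmult_le_compat; lra. }
  exists A. split. exact HA.
  set (cf := fun k => x ^ k / INR (fact k) * Derive_n psi k 0).
  pose proof (isg_sum g P cf m HP) as Hpoly.
  rewrite sum_last in Hpoly.
  2: { intros k Hk. unfold cf. rewrite Rmult_assoc, Hz by exact Hk. ring. }
  set (Q := fun t => sum_f_R0 (fun k => cf k * g k t) m) in Hpoly.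
  assert (HR := is_RInt_gen_minus (V := R_NormedModule) _ _ _ _ HA Hpoly).
  assert (HK : 0 <= C2 * x ^ S m) by (apply Rmult_le_pos; [lra | apply pow_le; lra]).
  pose proof (bound_by_exp _ _ _ HK HR) as Hbd.
  replace (x ^ m / INR (fact m) * (Derive_n psi m 0 * P m)) with (cf m * P m) by (unfold cf; ring).
  apply Hbd. intros t Ht. destruct (HG t Ht) as [HG0 HG1].
  set (T := sum_f_R0 (fun k => (x * t) ^ k / INR (fact k) * Derive_n psi k 0) m).
  assert (HQ : Q t = G t * phi (y * t) * T).
  { unfold Q, T, cf. rewrite sum_pt. apply sum_eq. intros k _. rewrite Hg. reflexivity. }
  change (Rabs (G t * phi (y * t) * psi (x * t) - Q t) <= C2 * x ^ S m * exp (- t)).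
  rewrite HQ.
  replace (G t * phi (y * t) * psi (x * t) - G t * phi (y * t) * T) with (G t * phi (y * t) * (psi (x * t) - T)) by ring.
  assert (Hxt : 0 <= x * t) by nra.
  assert (E1 := TLb psi m (x * t) (exp (x * t)) Hxt Hex).
  fold T in E1.
  assert (E1' : Rabs (psi (x * t) - T) <= (x * t) ^ S m / INR (fact (S m)) * exp (x * t)).
  { apply E1. intros z Hz'. eapply Rle_trans. apply Hbnd. apply exp_le. rewrite Rabs_pos_eq; lra. }
  rewrite !Rabs_mult, (Rabs_pos_eq (G t)) by exact HG0.
  pose proof (Hphi (y * t)) as H2. pose proof (Rabs_pos (phi (y * t))). pose proof (Rabs_pos (psi (x * t) - T)).
  assert (Ht2 : t ^ S m / INR (fact (S m)) <= exp t) by (apply exp_ge_pow; exact Ht).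
  assert (Hxe : exp (x * t) <= exp t) by (apply exp_le; nra).
  assert (Hxm : 0 <= x ^ S m) by (apply pow_le; lra).
  assert (Hr : (x * t) ^ S m / INR (fact (S m)) * exp (x * t) <= x ^ S m * exp (2 * t)).
  { rewrite Rpow_mult_distr. unfold Rdiv. rewrite Rmult_assoc, Rmult_assoc.
    apply Rmult_le_compat_l. exact Hxm.
    replace (2 * t) with (t + t) by ring. rewrite exp_plus.
    pose proof (exp_pos (x * t)). assert (0 <= t ^ S m * / INR (fact (S m))).
    { apply Rmult_le_pos. apply pow_le; lra. left; apply Rinv_0_lt_compat, INR_fact_lt_0. }
    rewrite <- Rmult_assoc. apply Rmult_le_compat; try lra; unfold Rdiv in Ht2; lra. }
  apply Rle_trans with (G t * (x ^ S m * exp (2 * t))).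
  { rewrite Rmult_assoc. apply Rmult_le_compat_l. exact HG0.
    replace (x ^ S m * exp (2 * t)) with (1 * (x ^ S m * exp (2 * t))) by ring.
    apply Rmult_le_compat; try lra. }
  replace (G t * (x ^ S m * exp (2 * t))) with (x ^ S m * (G t * exp (2 * t))) by ring.
  replace (C2 * x ^ S m * exp (- t)) with (x ^ S m * (C2 * exp (- t))) by ring.
  apply Rmult_le_compat_l; assumption.
Qed.

Lemma small_coef v x m C2 : 0 < x -> Rabs (x ^ m / INR (fact m) * v) <= C2 * x ^ (S m) ->
  Rabs v <= INR (fact m) * C2 * x.
Proof.
  intros Hx H. pose proof (INR_fact_lt_0 m) as Hf. pose proof (pow_lt x m Hx) as Hp.
  assert (Hq : 0 < x ^ m / INR (fact m)) by (apply Rdiv_lt_0_compat; lra).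
  rewrite Rabs_mult, (Rabs_pos_eq _ (Rlt_le _ _ Hq)) in H.
  apply (Rmult_le_reg_l _ _ _ Hq). eapply Rle_trans. exact H.
  right. simpl. field. lra.
Qed.

Lemma eta_abs x y A B :
  is_RInt_gen (fun t => G t * cos (y * t) * ch (Rabs x * t)) F0 Finf A ->
  is_RInt_gen (fun t => G t * sin (y * t) * sh (Rabs x * t)) F0 Finf B ->
  eta (x, y) = (A, B) \/ eta (x, y) = (A, - B).
Proof.
  intros HA HB. destruct (Rle_or_lt 0 x) as [Hx|Hx].
  - left. rewrite (Rabs_pos_eq x Hx) in HA, HB. apply eta_eq; assumption.
  - right. rewrite (Rabs_left x Hx) in HA, HB. apply eta_eq.
    + replace (fun t => G t * cos (y * t) * ch (x * t)) with (fun t => G t * cos (y * t) * ch (- x * t)). exact HA.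
      apply functional_extensionality. intros t. unfold ch.
      replace (- x * t) with (- (x * t)) by ring. rewrite Ropp_involutive. f_equal. f_equal. ring.
    + replace (fun t => G t * sin (y * t) * sh (x * t)) with (fun t => opp (G t * sin (y * t) * sh (- x * t))).
      exact (is_RInt_gen_opp (V := R_NormedModule) _ _ HB).
      apply functional_extensionality. intros t. unfold sh, opp; simpl.
      replace (- x * t) with (- (x * t)) by ring. rewrite Ropp_involutive. unfold Rdiv. ring.
Qed.

Lemma cont_inst (f1 f2 : R -> R) y x : (forall u, ex_derive f1 u) -> (forall u, ex_derive f2 u) ->
  forall t, continuous (fun t => G t * f1 (y * t) * f2 (x * t)) t.
Proof.
  intros H1 H2 t. apply (continuous_ext (fun t => G t * (f1 (y * t) * f2 (x * t)))).
  intros; symmetry; apply Rmult_assoc.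
  apply contG. intros u. apply ex_derive_mult.
  apply (ex_derive_comp f1 (fun t => y * t)). apply H1. auto_derive; auto.
  apply (ex_derive_comp f2 (fun t => x * t)). apply H2. auto_derive; auto.
Qed.

Theorem theorem2 :
  forall y : R, exists eps : R, 0 < eps /\
    forall x : R, 0 < Rabs x < eps -> eta (x, y) <> RtoC 0.
Proof.
  intros y.
  destruct (classic (exists k, ~ (Derive_n ch k 0 * Pc y k = 0 /\ Derive_n sh k 0 * Qs y k = 0))) as [Hex|Hno].
  2: { exfalso. apply (case2 y). intros k. apply NNPP. intros Hk. apply Hno. exists k. exact Hk. }
  destruct (ex_min _ Hex) as [m [Hm Hmin]].
  assert (Hz : forall k, (k < m)%nat -> Derive_n ch k 0 * Pc y k = 0 /\ Derive_n sh k 0 * Qs y k = 0).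
  { intros k Hk. apply NNPP. apply Hmin. exact Hk. }
  set (al := Derive_n ch m 0 * Pc y m) in *. set (be := Derive_n sh m 0 * Qs y m) in *.
  assert (Hab : 0 < Rabs al + Rabs be).
  { destruct (Req_dec al 0) as [Ha|Ha]. destruct (Req_dec be 0) as [Hb|Hb].
    - exfalso; apply Hm; split; assumption.
    - pose proof (Rabs_pos_lt _ Hb). pose proof (Rabs_pos al). lra.
    - pose proof (Rabs_pos_lt _ Ha). pose proof (Rabs_pos be). lra. }
  destruct (G_decay 2) as [C2 [HC2 HG]].
  set (D := 2 * INR (fact m) * C2 + 1).
  assert (HD : 0 < D) by (unfold D; pose proof (INR_fact_lt_0 m); nra).
  exists (Rmin 1 ((Rabs al + Rabs be) / D)). split.
  { apply Rmin_case. lra. apply Rdiv_lt_0_compat; assumption. }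
  intros x [Hx1 Hx2] Heta.
  set (x' := Rabs x) in *.
  assert (Hx' : 0 < x' <= 1) by (split; [lra|]; pose proof (Rmin_l 1 ((Rabs al + Rabs be) / D)); lra).
  assert (Hx'2 : x' < (Rabs al + Rabs be) / D) by (pose proof (Rmin_r 1 ((Rabs al + Rabs be) / D)); lra).
  destruct (case1_gen cos ch (gc y) (Pc y) y m x' C2) as [A [HA HAb]];
    [intros; reflexivity | apply gc_isg | intros u; apply Rabs_le, COS_bound | exact ch_exd | exact ch_bnd
    | apply cont_inst; intros u; [auto_derive; auto | unfold ch; auto_derive; auto]
    | exact Hx' | exact HC2 | exact HG | intros k Hk; apply (Hz k Hk) |].
  destruct (case1_gen sin sh (gs y) (Qs y) y m x' C2) as [B [HB HBb]];
    [intros; reflexivity | apply gs_isg | intros u; apply Rabs_le, SIN_bound | exact sh_exd | exact sh_bnd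
    | apply cont_inst; intros u; [auto_derive; auto | unfold sh; auto_derive; auto]
    | exact Hx' | exact HC2 | exact HG | intros k Hk; apply (Hz k Hk) |].
  assert (HAB : A = 0 /\ B = 0).
  { destruct (eta_abs x y A B HA HB) as [E|E]; rewrite E in Heta; unfold RtoC in Heta;
      injection Heta; intros; lra. }
  destruct HAB as [HA0 HB0]. rewrite HA0 in HAb. rewrite HB0 in HBb.
  rewrite Rminus_0_l, Rabs_Ropp in HAb, HBb.
  pose proof (small_coef _ _ _ _ (proj1 Hx') HAb) as Ha.
  pose proof (small_coef _ _ _ _ (proj1 Hx') HBb) as Hb.
  change (Rabs al <= INR (fact m) * C2 * x') in Ha. change (Rabs be <= INR (fact m) * C2 * x') in Hb.
  assert (Rabs al + Rabs be < D * ((Rabs al + Rabs be) / D)).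
  { apply Rle_lt_trans with (D * x'). unfold D. replace ((2 * INR (fact m) * C2 + 1) * x') with (2 * (INR (fact m) * C2 * x') + x') by ring. lra.
    apply Rmult_lt_compat_l; assumption. }
  replace (D * ((Rabs al + Rabs be) / D)) with (Rabs al + Rabs be) in H0 by (field; lra).
  lra.
Qed.
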